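(* Let $n\geq 2$ and let $N$ be a binary level-1 network on $n$ leaves. Then $g(N)\leq n-c_N-2$. Moreover, equality $g(N)=n-c_N-2$ holds if $N$ is a phylogenetic tree (i.e. has no hybrid vertex) or if every gall of $N$ has exactly three outgoing arcs.
   Context: A leaf of a DAG is a vertex of in-degree 1 and out-degree 0. For a finite set $X$, a phylogenetic network on $X$ is a DAG (no loops, no multiple arcs) with a unique vertex (the root) of in-degree 0, which has out-degree at least 2, whose set of leaves is $X$, and in which every other non-leaf vertex is either a split vertex (in-degree 1, out-degree $\geq 2$) or a hybrid vertex (in-degree $\geq 2$, out-degree $\geq 1$). It is binary if the root and all split vertices have out-degree 2 and every hybrid vertex has in-degree 2 and out-degree 1. $U(N)$ denotes the underlying undirected graph. A binary level-1 network is a binary phylogenetic network in which every biconnected component of $U(N)$ contains at most one hybrid vertex; by standing convention every cycle of $U(N)$ has at least four vertices. A gall is a biconnected component of $U(N)$ with more than one edge (with the arc directions of $N$); $g(N)$ is the number of galls of $N$. An outgoing arc of a gall $C$ is an arc whose tail is a vertex of $C$ but whose head is not. An arc of $N$ is a cut arc if deleting it disconnects $U(N)$; it is trivial if its head is a leaf and non-trivial otherwise. $c_N$ denotes the number of non-trivial cut arcs of $N$. *)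

(* Defs.v *)
From mathcomp Require Import all_boot.
Set Implicit Arguments. Unset Strict Implicit. Unset Printing Implicit Defensive.

Section Network.
Variables (V : finType) (E : rel V).

Definition indeg (v : V) : nat := #|[pred u | E u v]|.
Definition outdeg (v : V) : nat := #|[pred w | E v w]|.

(* DAG: no directed cycle (in particular no loops). A relation has no multiple arcs. *)
Definition acyclic : Prop := forall u v, E u v -> ~~ connect E v u.

Definition is_leaf (v : V) : bool := (indeg v == 1) && (outdeg v == 0).
Definition is_split (v : V) : bool := (indeg v == 1) && (outdeg v == 2).
Definition is_hybrid (v : V) : bool := (indeg v == 2) && (outdeg v == 1).

Definition leaves : {set V} := [set v | is_leaf v].

Definition binary_network : Prop :=
  acyclic /\
  exists r : V,
    [/\ indeg r = 0, outdeg r = 2, (forall v, indeg v = 0 -> v = r) &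
        forall v, v != r -> [|| is_leaf v, is_split v | is_hybrid v]].

Definition adj : rel V := fun x y => E x y || E y x.

Definition adj_in (S : {set V}) : rel V :=
  fun x y => [&& x \in S, y \in S & adj x y].

Definition connected_in (S : {set V}) : bool :=
  [forall x in S, forall y in S, connect (adj_in S) x y].

Definition nonseparable (S : {set V}) : bool :=
  connected_in S && [forall v in S, connected_in (S :\ v)].

(* biconnected components (blocks) of U(N), identified with their vertex sets
   (blocks of a simple graph are induced subgraphs) *)
Definition is_block (S : {set V}) : bool := maxset nonseparable S.

(* number of edges of U(N) within S (each edge of U(N) is exactly one arc) *)
Definition n_edges_in (S : {set V}) : nat :=
  #|[set p : V * V | [&& E p.1 p.2, p.1 \in S & p.2 \in S]]|.

Definition is_gall (S : {set V}) : bool := is_block S && (1 < n_edges_in S).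

Definition n_galls : nat := #|[set S : {set V} | is_gall S]|.

Definition n_outgoing (C : {set V}) : nat :=
  #|[set p : V * V | [&& E p.1 p.2, p.1 \in C & p.2 \notin C]]|.

Definition adj_minus (a b : V) : rel V :=
  fun x y => adj x y && ~~ (((x == a) && (y == b)) || ((x == b) && (y == a))).

Definition is_cut_arc (a b : V) : bool :=
  E a b && ~~ [forall x, forall y, connect (adj_minus a b) x y].

Definition c_N : nat :=
  #|[set p : V * V | is_cut_arc p.1 p.2 && ~~ is_leaf p.2]|.

(* every cycle of U(N) has at least 4 vertices, i.e. U(N) has no triangle *)
Definition no_triangle : Prop :=
  forall x y z, adj x y -> adj y z -> adj z x -> False.

Definition binary_level1 : Prop :=
  [/\ binary_network, no_triangle &
      forall S : {set V}, is_block S -> #|[set v in S | is_hybrid v]| <= 1].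

End Network.

(* Main.v *)
Require Import Defs.
From mathcomp Require Import all_boot zify.
Set Implicit Arguments. Unset Strict Implicit. Unset Printing Implicit Defensive.

Section Net.
Variables (V : finType) (E : rel V).
Hypothesis Hacyc : acyclic E.

Lemma noloop x : E x x = false.
Proof. apply/negbTE/negP => H; have := Hacyc H; by rewrite connect0. Qed.

Lemma antisym x y : E x y -> E y x = false.
Proof. move=> Hxy; apply/negbTE/negP => Hyx; have := Hacyc Hxy; by rewrite connect1. Qed.

Lemma adjC : symmetric (adj E).
Proof. by move=> x y; rewrite /adj orbC. Qed.

Lemma adj_neq x y : adj E x y -> x != y.
Proof. by apply: contraL => /eqP ->; rewrite /adj noloop. Qed.

Lemma adj_inC (S : {set V}) : symmetric (adj_in E S).
Proof. by move=> x y; rewrite /adj_in adjC andbCA. Qed.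

Lemma conn_sym (S : {set V}) x y : connect (adj_in E S) x y = connect (adj_in E S) y x.
Proof. exact: (sym_connect_sym (adj_inC S)). Qed.

Lemma conn_mono (S T : {set V}) x y : S \subset T -> connect (adj_in E S) x y -> connect (adj_in E T) x y.
Proof.
move=> sST; apply: connect_sub => u w /and3P[uS wS a]; apply: connect1.
by rewrite /adj_in (subsetP sST _ uS) (subsetP sST _ wS).
Qed.

Lemma connected_inP (S : {set V}) :
  reflect (forall x y, x \in S -> y \in S -> connect (adj_in E S) x y) (connected_in E S).
Proof.
apply: (iffP forall_inP) => [H x y xS yS | H x xS].
  exact: (forall_inP (H x xS)).
by apply/forall_inP => y yS; apply: H.
Qed.

Lemma hub (S : {set V}) z : (forall x, x \in S -> connect (adj_in E S) x z) -> connected_in E S.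
Proof.
move=> H; apply/connected_inP => x y xS yS.
by apply: connect_trans (H x xS) _; rewrite conn_sym; apply: H.
Qed.

Lemma connected_U (A B : {set V}) z : connected_in E A -> connected_in E B -> z \in A -> z \in B ->
  connected_in E (A :|: B).
Proof.
move=> /connected_inP cA /connected_inP cB zA zB; apply: (hub (z := z)) => x.
rewrite inE => /orP[xA|xB].
  by apply: conn_mono (subsetUl A B) _; apply: cA.
by apply: conn_mono (subsetUr A B) _; apply: cB.
Qed.

Lemma ns_del (A : {set V}) v : nonseparable E A -> connected_in E (A :\ v).
Proof.
case/andP=> cA /forall_inP rA; case vA: (v \in A); first exact: rA.
suff -> : A :\ v = A by [].
by apply/setP => w; rewrite !inE; case: eqP => // ->; rewrite vA.
Qed.

Lemma ns_U (A B : {set V}) x y : nonseparable E A -> nonseparable E B -> x != y ->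
  x \in A -> y \in A -> x \in B -> y \in B -> nonseparable E (A :|: B).
Proof.
move=> nA nB xy xA yA xB yB.
move: (nA) (nB) => /andP[cA _] /andP[cB _].
apply/andP; split; first exact: connected_U cA cB xA xB.
apply/forall_inP => v _; rewrite setDUl.
have [vx|vx] := eqVneq v x.
  subst v; apply: (connected_U (z := y)) (ns_del x nA) (ns_del x nB) _ _;
  by rewrite in_setD1 eq_sym xy.
apply: (connected_U (z := x)) (ns_del v nA) (ns_del v nB) _ _;
by rewrite in_setD1 eq_sym vx.
Qed.

Lemma block_ns (S : {set V}) : is_block E S -> nonseparable E S.
Proof. by case/maxsetP. Qed.

Lemma block_uniq (S T : {set V}) x y : is_block E S -> is_block E T -> x != y ->
  x \in S -> y \in S -> x \in T -> y \in T -> S = T.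
Proof.
move=> bS bT xy xS yS xT yT.
have nsU := ns_U (block_ns bS) (block_ns bT) xy xS yS xT yT.
case/maxsetP: bS => _ HS; case/maxsetP: bT => _ HT.
by rewrite -(HS _ nsU (subsetUl S T)) (HT _ nsU (subsetUr S T)).
Qed.

Lemma block_exists (S0 : {set V}) : nonseparable E S0 -> exists2 B, is_block E B & S0 \subset B.
Proof. by move=> H; case: (maxset_exists H) => B; exists B. Qed.

Lemma three_card (S : {set V}) a b c : a \in S -> b \in S -> c \in S -> a != b -> a != c -> b != c -> 2 < #|S|.
Proof.
move=> aS bS cS ab ac bc.
rewrite (cardsD1 a) aS (cardsD1 b) !inE eq_sym ab bS (cardsD1 c) !inE eq_sym bc eq_sym ac cS.
by [].
Qed.

Lemma pick3 (S : {set V}) a b : 2 < #|S| -> exists2 w, w \in S & (w != a) && (w != b).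
Proof.
rewrite (cardsD1 a) (cardsD1 b (S :\ a)) => H.
have : 0 < #|S :\ a :\ b|.
  by move: H; case: (a \in S); case: (b \in S :\ a) => /=; lia.
case/card_gt0P => w; rewrite !inE => /and3P[wb wa wS]; exists w => //.
by rewrite wa wb.
Qed.

Lemma first_step (e : rel V) x y : connect e x y -> x != y -> exists u, e x u.
Proof.
case/connectP => [[|u p]] /=; first by move=> _ ->; rewrite eqxx.
by case/andP => H _ _ _; exists u.
Qed.

Definition nbr (S : {set V}) v := [set u in S | adj E v u].

Lemma nbr2 (S : {set V}) v : nonseparable E S -> 2 < #|S| -> v \in S -> 1 < #|nbr S v|.
Proof.
move=> nS S3 vS; move: (nS) => /andP[/connected_inP cS _].
case: (pick3 v v S3) => w wS /andP[wv _].
rewrite eq_sym in wv.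
case: (first_step (cS _ _ vS wS) wv) => u /and3P[_ uS avu].
case: (pick3 v u S3) => w' w'S /andP[w'v w'u].
move: (nS) => /andP[_ /forall_inP rS].
have vSu : v \in S :\ u by rewrite in_setD1 vS (adj_neq avu).
have w'Su : w' \in S :\ u by rewrite in_setD1 w'S w'u.
rewrite eq_sym in w'v.
case: (first_step (connected_inP _ (rS u uS) _ _ vSu w'Su) w'v) => u' /and3P[_ u'Su avu'].
apply/card_gt1P; exists u, u'; rewrite !inE uS avu avu'; move: u'Su; rewrite in_setD1.
by case/andP => u'u ->; split => //; rewrite eq_sym.
Qed.

Lemma card_pair0 (P : V -> V -> bool) :
  #|[set p : V * V | P p.1 p.2]| = \sum_x \sum_y nat_of_bool (P x y).
Proof.
rewrite (pair_bigA _ (fun x y => nat_of_bool (P x y))) /=.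
rewrite -sum1_card big_mkcond /=; apply: eq_big => // p _; rewrite inE; by case: (P _ _).
Qed.

Lemma sum_card (T : finType) (P : T -> bool) : \sum_y nat_of_bool (P y) = #|[set y | P y]|.
Proof. rewrite -sum1_card [RHS]big_mkcond /=; apply: eq_big => // y _; by rewrite inE. Qed.

Lemma card_pair (P : V -> V -> bool) :
  #|[set p : V * V | P p.1 p.2]| = \sum_x #|[set y | P x y]|.
Proof. rewrite card_pair0; apply: eq_big => // x _; exact: sum_card. Qed.

Lemma card_pair2 (P : V -> V -> bool) :
  #|[set p : V * V | P p.1 p.2]| = \sum_y #|[set x | P x y]|.
Proof. rewrite card_pair0 exchange_big; apply: eq_big => // x _; exact: sum_card. Qed.

Lemma edges_out (S : {set V}) : n_edges_in E S = \sum_(x in S) #|[set y in S | E x y]|.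
Proof.
rewrite /n_edges_in (card_pair (fun x y => [&& E x y, x \in S & y \in S])) [RHS]big_mkcond /=.
apply: eq_big => // x _; case xS: (x \in S).
  by apply: eq_card => y; rewrite !inE andbC.
apply: eq_card0 => y; by rewrite !inE andbF.
Qed.

Lemma edges_in (S : {set V}) : n_edges_in E S = \sum_(y in S) #|[set x in S | E x y]|.
Proof.
rewrite /n_edges_in (card_pair2 (fun x y => [&& E x y, x \in S & y \in S])) [RHS]big_mkcond /=.
apply: eq_big => // y _; case yS: (y \in S).
  by apply: eq_card => x; rewrite !inE andbT andbC.
apply: eq_card0 => x; by rewrite !inE !andbF.
Qed.

Lemma ns_edges (S : {set V}) : nonseparable E S -> 2 < #|S| -> #|S| <= n_edges_in E S.
Proof.
move=> nS S3.
have H : \sum_(v in S) 2 <= \sum_(v in S) (#|[set y in S | E v y]| + #|[set x in S | E x v]|).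
  apply: leq_sum => v vS; apply: leq_trans (nbr2 nS S3 vS) _.
  apply: leq_trans (leq_card_setU _ _).1; apply: subset_leq_card.
  by apply/subsetP => u; rewrite !inE /adj => /andP[-> /orP[]->]; rewrite ?orbT.
move: H; rewrite big_split /= -edges_out -edges_in sum_nat_const; lia.
Qed.


Lemma path_conn (T : {set V}) x p : path (adj E) x p -> {subset x :: p <= T} ->
  forall z, z \in x :: p -> connect (adj_in E T) x z.
Proof.
elim: p x => [|y p IH] x /=.
  by move=> _ _ z; rewrite inE => /eqP ->.
case/andP => axy pyp sub z; rewrite inE => /orP[/eqP -> //|zp].
have sub' : {subset y :: p <= T} by move=> w wp; apply: sub; rewrite inE wp orbT.
apply: connect_trans (IH y pyp sub' z zp).
apply: connect1; rewrite /adj_in axy !sub ?inE ?eqxx ?orbT //.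
Qed.

Lemma cycle_ns x p : uniq (x :: p) -> path (adj E) x p -> adj E (last x p) x ->
  nonseparable E [set z in x :: p].
Proof.
move=> U P L.
have subT : {subset x :: p <= [set z in x :: p]} by move=> z zi; rewrite inE.
apply/andP; split.
  apply: (hub (z := x)) => z; rewrite inE => zi.
  by rewrite conn_sym; apply: (path_conn P subT zi).
apply/forall_inP => v; rewrite inE => vi.
have [vx|vx] := eqVneq v x.
  subst v; case: p U P L subT vi => [|y p'] U P L subT _.
    by apply: (hub (z := x)) => z; rewrite !inE => /andP[/negbTE ->].
  apply: (hub (z := y)) => z zT; rewrite conn_sym.
  move: P => /= /andP[_ P].
  apply: (path_conn P).
    move=> w wi; rewrite in_setD1 inE; apply/andP; split; last by rewrite inE wi orbT.
    by apply: contraTneq wi => ->; case/andP: U.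
  by move: zT; rewrite in_setD1 !inE => /andP[/negbTE ->].
have vp : v \in p by move: vi; rewrite inE (negbTE vx).
case/splitPr: vp U P L subT {vi} => p1 p2 U P L subT.
move: (U); rewrite -cat_cons cat_uniq => /and3P[_ Hh Uv].
have vnx : v \notin x :: p1 by apply: contra Hh => vin; apply/hasP; exists v; rewrite ?inE ?eqxx.
have vnp2 : v \notin p2 by case/andP: Uv.
move: P; rewrite cat_path => /andP[P1 P2].
apply: (hub (z := x)) => z; rewrite in_setD1 inE => /andP[zv].
rewrite mem_cat => /orP[zi|]; last rewrite inE (negbTE zv) /=.
  rewrite conn_sym; apply: (path_conn P1 _ zi).
  move=> w wi; rewrite in_setD1 inE mem_cat wi andbT.
  by apply: contraNneq vnx => <-.
case: p2 P2 L vnp2 {Uv U subT Hh} => [//|y p2'] /= /and3P[_ _ P2] L vnp2 zi.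
have sub2 : {subset y :: p2' <= [set z in (x :: p1) ++ [:: v, y & p2']] :\ v}.
  move=> w wi; rewrite in_setD1 inE mem_cat /= !inE.
  have -> : w != v by apply: contraNneq vnp2 => <-.
  by move: wi; rewrite inE => /orP[->|->]; rewrite ?orbT.
apply: connect_trans (_ : connect _ z y) _; first by rewrite conn_sym; apply: (path_conn P2 sub2 zi).
apply: connect_trans (path_conn P2 sub2 (mem_last y p2')) _.
apply: connect1; rewrite /adj_in sub2 ?mem_last //.
move: L; rewrite last_cat /= => ->; rewrite andbT in_setD1 eq_sym vx inE mem_head.
by [].
Qed.

Lemma adj_minusC a b : symmetric (adj_minus E a b).
Proof.
move=> x y; rewrite /adj_minus adjC; congr (_ && ~~ _).
by rewrite orbC andbC [(y == b) && _]andbC.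
Qed.

Lemma gall_card3 C : is_gall E C -> 2 < #|C|.
Proof.
case/andP=> _ /card_gt1P[[p1 p2] [[q1 q2] [pin qin pq]]].
move: pin qin; rewrite !inE /= => /and3P[Ep p1C p2C] /and3P[Eq q1C q2C].
have p12 : p1 != p2 by apply: contraTneq Ep => ->; rewrite noloop.
have H3 : forall c, c \in C -> c != p1 -> c != p2 -> 2 < #|C|.
  by move=> c cC c1 c2; apply: (three_card p1C p2C cC); rewrite // eq_sym.
have [e1|n1] := eqVneq q1 p1; last have [e2|n2] := eqVneq q1 p2; last exact: H3 q1C n1 n2.
  subst q1; have [e3|n3] := eqVneq q2 p2; first by subst; rewrite eqxx in pq.
  have [e4|n4] := eqVneq q2 p1; first by subst; rewrite noloop in Eq.
  exact: H3 q2C n4 n3.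
subst q1; have [e3|n3] := eqVneq q2 p1; first by subst; rewrite (antisym Ep) in Eq.
have [e4|n4] := eqVneq q2 p2; first by subst; rewrite noloop in Eq.
exact: H3 q2C n3 n4.
Qed.

Lemma noncut_gall a b : E a b -> ~~ is_cut_arc E a b ->
  exists2 C, is_gall E C & (a \in C) && (b \in C).
Proof.
move=> Eab; rewrite /is_cut_arc Eab /= negbK => /forallP/(_ b)/forallP/(_ a).
case/connectP => p0 P0; case: (shortenP P0) => p P U _ L {P0}.
have ab : a != b by apply: contraTneq Eab => ->; rewrite noloop.
case: p P U L => [|y [|z p]] P U L.
- by move: L ab => /= ->; rewrite eqxx.
- by move: P L => /= /andP[Pby _] Ly; move: Pby; rewrite -Ly /adj_minus !eqxx !andbT orbT andbF.
have P' : path (adj E) b [:: y, z & p].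
  by apply: sub_path P => s t /andP[].
have L' : adj E (last b [:: y, z & p]) b by rewrite -L /adj Eab.
have nS := cycle_ns U P' L'.
case: (block_exists nS) => B bB SB.
have B3 : 2 < #|B|.
  apply: leq_trans (subset_leq_card SB); rewrite cardsE; move/card_uniqP: U => ->.
  by [].
exists B.
  rewrite /is_gall bB /=; apply: leq_trans (ns_edges (block_ns bB) B3); exact: ltnW.
by rewrite !(subsetP SB) // inE ?L ?mem_last ?mem_head.
Qed.

Variable r : V.
Hypothesis Hr0 : indeg E r = 0.
Hypothesis Hroot : forall v, indeg E v = 0 -> v = r.

Lemma reach v : connect E r v.
Proof.
pose F u := #|[set w | connect E w u]|.
case: (@arg_minnP _ v (fun u => connect E u v) F (connect0 E v)) => u uv umin.
suff -> : r = u by [].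
apply/esym/Hroot; apply/eqP; rewrite eqn0Ngt; apply/negP => /card_gt0P[w]; rewrite inE => Ewu.
have wv : connect E w v by apply: connect_trans (connect1 Ewu) uv.
have := umin w wv; rewrite leqNgt => /negP; apply; apply: proper_card.
apply/properP; split.
  by apply/subsetP => t; rewrite !inE => tw; apply: connect_trans tw (connect1 Ewu).
exists u; rewrite !inE ?connect0 //; exact: Hacyc Ewu.
Qed.

Lemma conn_all x y : connect (adj E) x y.
Proof.
have H z : connect (adj E) r z by apply: connect_sub (reach z) => s t st; apply: connect1; rewrite /adj st.
by apply: connect_trans (_ : connect _ x r) (H y); rewrite (sym_connect_sym adjC) H.
Qed.

Lemma cut_not_gall a b C : is_cut_arc E a b -> is_gall E C -> a \in C -> b \in C -> False.
Proof.
case/andP=> Eab /negP ncut gC aC bC; apply: ncut.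
have ab : a != b by apply: contraTneq Eab => ->; rewrite noloop.
case: (pick3 a b (gall_card3 gC)) => w wC /andP[wa wb].
have nC : nonseparable E C by case/andP: gC => /block_ns.
have sub v u1 u2 : (v == a) || (v == b) -> connect (adj_in E (C :\ v)) u1 u2 ->
    connect (adj_minus E a b) u1 u2.
  move=> vab; apply: connect_sub => s t /and3P[sC tC st]; apply: connect1.
  rewrite /adj_minus st /=; move: sC tC; rewrite !in_setD1 => /andP[sv _] /andP[tv _].
  by case/orP: vab => /eqP <-; rewrite (negbTE sv) (negbTE tv) ?andbF.
have Hba : connect (adj_minus E a b) b a.
  apply: connect_trans (_ : connect _ b w) _.
    apply: (sub a); first by rewrite eqxx.
    by apply: (connected_inP _ (ns_del a nC)); rewrite in_setD1 ?bC ?wC ?wa // eq_sym ab.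
  apply: (sub b); first by rewrite eqxx orbT.
  by apply: (connected_inP _ (ns_del b nC)); rewrite in_setD1 ?aC ?wC ?wb ?ab.
apply/forallP => x; apply/forallP => y.
apply: connect_sub (conn_all x y) => s t st.
case: (boolP (((s == a) && (t == b)) || ((s == b) && (t == a)))) => [|H].
  case/orP=> /andP[/eqP-> /eqP->] //.
  by rewrite (sym_connect_sym (adj_minusC a b)).
by apply: connect1; rewrite /adj_minus st H.
Qed.

Hypothesis Hr2 : outdeg E r = 2.
Hypothesis Htype : forall v, v != r -> [|| is_leaf E v, is_split E v | is_hybrid E v].

Lemma deg_id v : 2 * indeg E v + 2 * (v == r) = outdeg E v + 2 * is_leaf E v + 3 * is_hybrid E v.
Proof.
have [->|vr] := eqVneq v r; first by rewrite /is_leaf /is_hybrid Hr0 Hr2.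
by case/or3P: (Htype vr) => /andP[/eqP i /eqP o]; rewrite /is_leaf /is_hybrid i o ?(negbTE vr).
Qed.

Lemma indeg_bound v : indeg E v + (v == r) <= 1 + is_hybrid E v.
Proof.
have [->|vr] := eqVneq v r; first by rewrite /is_leaf /is_hybrid Hr0 Hr2.
by case/or3P: (Htype vr) => /andP[/eqP i /eqP o]; rewrite /is_leaf /is_hybrid i o ?(negbTE vr).
Qed.

Lemma outdeg_nonleaf v : ~~ is_leaf E v -> outdeg E v + is_hybrid E v = 2.
Proof.
have [->|vr] := eqVneq v r; first by rewrite /is_leaf /is_hybrid Hr0 Hr2.
by case/or3P: (Htype vr) => /andP[/eqP i /eqP o]; rewrite /is_leaf /is_hybrid i o.
Qed.

Lemma hyb_not_root v : is_hybrid E v -> v != r.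
Proof. by apply: contraTneq => ->; rewrite /is_hybrid Hr0. Qed.

Lemma sum_indeg : \sum_v indeg E v = #|[set p : V * V | E p.1 p.2]|.
Proof. rewrite card_pair2; apply: eq_bigr => y _; apply: eq_card => x; by rewrite !inE. Qed.

Lemma sum_outdeg : \sum_v outdeg E v = #|[set p : V * V | E p.1 p.2]|.
Proof. rewrite card_pair; apply: eq_bigr => y _; apply: eq_card => x; by rewrite !inE. Qed.

Lemma arcs_eq : #|[set p : V * V | E p.1 p.2]| + 2 = 2 * #|leaves E| + 3 * #|[set v | is_hybrid E v]|.
Proof.
have : \sum_v (2 * indeg E v + 2 * (v == r)) = \sum_v (outdeg E v + 2 * is_leaf E v + 3 * is_hybrid E v).
  by apply: eq_bigr => v _; exact: deg_id.
rewrite !big_split /= !big1_eq sum_indeg sum_outdeg.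
have -> : \sum_v nat_of_bool (v == r) = 1.
  by rewrite sum_card; apply/eqP; apply/card1P; exists r => v; rewrite !inE.
rewrite !sum_card => H.
have e1 : #|[set y | is_leaf E y]| = #|leaves E| by [].
have e2 : #|[set y | is_hybrid E y]| = #|[set v | is_hybrid E v]| by [].
move: H; rewrite /leaves; set A := #|[set p : V * V | E p.1 p.2]|; set L := #|[set v | is_leaf E v]|; set Hh := #|[set v | is_hybrid E v]|. lia.
Qed.

Lemma leaf_parent l : is_leaf E l -> exists p, forall u, E u l = (u == p).
Proof. case/andP => /card1P[p Hp] _; exists p => u; move: (Hp u); by rewrite !inE. Qed.

Lemma leaf_noout l : is_leaf E l -> forall w, E l w = false.
Proof. case/andP => _ /eqP/card0_eq H w; move: (H w); by rewrite !inE. Qed.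

Lemma leaf_cut l p : is_leaf E l -> E p l -> is_cut_arc E p l.
Proof.
move=> Ll Epl; rewrite /is_cut_arc Epl /=; apply/negP => /forallP/(_ l)/forallP/(_ p) C.
have lp : l != p by apply: contraTneq Epl => ->; rewrite noloop.
case: (first_step C lp) => u; rewrite /adj_minus /adj (leaf_noout Ll) /=.
case: (leaf_parent Ll) => q Hq; move: (Epl); rewrite Hq => /eqP pq; subst q.
by rewrite Hq => /andP[/eqP -> ]; rewrite !eqxx orbT.
Qed.

Lemma gall_block C : is_gall E C -> is_block E C.
Proof. by case/andP. Qed.

Lemma leafcut_card : #|[set q : V * V | is_cut_arc E q.1 q.2 && is_leaf E q.2]| = #|leaves E|.
Proof.
rewrite -(@card_in_imset _ _ snd).
  apply: eq_card => l; rewrite [in RHS]inE; apply/imsetP/idP => [[q]|Ll].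
    by rewrite inE => /andP[_ L] ->.
  case: (leaf_parent Ll) => p Hp; exists (p, l) => //.
  by rewrite inE /= Ll andbT leaf_cut // Hp.
move=> [a l] [a' l']; rewrite !inE /= => /andP[/andP[Eq _] Lq] /andP[/andP[Eq' _] _] e.
subst l'; case: (leaf_parent Lq) => p Hp; rewrite Hp in Eq; rewrite Hp in Eq'.
by rewrite (eqP Eq) (eqP Eq').
Qed.

Lemma cut_card : #|[set q : V * V | is_cut_arc E q.1 q.2]| = c_N E + #|leaves E|.
Proof.
rewrite -leafcut_card /c_N -(cardsID [set q : V * V | is_leaf E q.2] [set q : V * V | is_cut_arc E q.1 q.2]) addnC.
by congr addn; apply: eq_card => q; rewrite !inE // andbC.
Qed.

Lemma arcs_split : #|[set q : V * V | E q.1 q.2]| =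
  #|[set q : V * V | is_cut_arc E q.1 q.2]| + #|[set q : V * V | E q.1 q.2 && ~~ is_cut_arc E q.1 q.2]|.
Proof.
rewrite -(cardsID [set q : V * V | is_cut_arc E q.1 q.2] [set q : V * V | E q.1 q.2]).
congr addn; apply: eq_card => q; rewrite !inE /is_cut_arc; by case: (E q.1 q.2); rewrite /= ?andbT.
Qed.

Lemma noncut_sum : #|[set q : V * V | E q.1 q.2 && ~~ is_cut_arc E q.1 q.2]| =
  \sum_(C | is_gall E C) n_edges_in E C.
Proof.
have -> : \sum_(C | is_gall E C) n_edges_in E C =
    \sum_(C | is_gall E C) \sum_(q : V * V) nat_of_bool ([&& E q.1 q.2, q.1 \in C & q.2 \in C]).
  by apply: eq_bigr => C _; rewrite /n_edges_in -sum_card.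
rewrite exchange_big /= -sum_card; apply: eq_bigr => [[a b]] _ /=.
case Eab: (E a b) => /=; last by rewrite big1.
case: (boolP (is_cut_arc E a b)) => cut /=.
  rewrite big1 // => C gC; case: (boolP (a \in C)) => aC; case: (boolP (b \in C)) => bC //=.
  by case: (cut_not_gall cut gC aC bC).
case: (noncut_gall Eab cut) => C0 gC0 /andP[aC0 bC0].
rewrite (bigD1 C0) //= aC0 bC0 big1 // => C /andP[gC CC0].
case: (boolP (a \in C)) => aC; case: (boolP (b \in C)) => bC //=.
have ab : a != b by apply: contraTneq Eab => ->; rewrite noloop.
by rewrite (block_uniq (gall_block gC) (gall_block gC0) ab aC bC aC0 bC0) eqxx in CC0.
Qed.

Hypothesis Htri : no_triangle E.
Hypothesis Hlvl : forall S : {set V}, is_block E S -> #|[set v in S | is_hybrid E v]| <= 1.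

Lemma sum_card_in (T : finType) (A : {set T}) (P : T -> bool) :
  \sum_(x in A) nat_of_bool (P x) = #|[set x in A | P x]|.
Proof.
rewrite -sum1_card [RHS]big_mkcond [LHS]big_mkcond; apply: eq_big => // x _; rewrite inE.
by case: (x \in A); case: (P x).
Qed.

Lemma path_enter (C : {set V}) x p : path E x p -> x \notin C -> last x p \in C ->
  exists q : V * V, [&& E q.1 q.2, q.1 \notin C & q.2 \in C].
Proof.
elim: p x => [|y p IH] x /=; first by move=> _ xC xC'; rewrite xC' in xC.
case/andP=> Exy Pp xC Lp; case: (boolP (y \in C)) => yC.
  by exists (x, y); rewrite /= Exy xC yC.
exact: IH Pp yC Lp.
Qed.

Definition inC (C : {set V}) := #|[set q : V * V | [&& E q.1 q.2, q.1 \notin C & q.2 \in C]]|.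

Lemma in_sum (C : {set V}) : \sum_(v in C) indeg E v = n_edges_in E C + inC C.
Proof.
have -> : \sum_(v in C) indeg E v = #|[set q : V * V | E q.1 q.2 && (q.2 \in C)]|.
  rewrite (card_pair2 (fun x y => E x y && (y \in C))) big_mkcond; apply: eq_bigr => y _.
  case yC: (y \in C); first by apply: eq_card => x; rewrite !inE andbT.
  by apply/esym/eq_card0 => x; rewrite !inE andbF.
rewrite -[LHS](cardsID [set q : V * V | q.1 \in C]) /n_edges_in /inC.
by congr addn; apply: eq_card => q; rewrite !inE; case: (E _ _); case: (_ \in C); case: (_ \in C).
Qed.

Lemma out_sum (C : {set V}) : \sum_(v in C) outdeg E v = n_edges_in E C + n_outgoing E C.
Proof.
have -> : \sum_(v in C) outdeg E v = #|[set q : V * V | E q.1 q.2 && (q.1 \in C)]|.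
  rewrite (card_pair (fun x y => E x y && (x \in C))) big_mkcond; apply: eq_bigr => x _.
  case xC: (x \in C); first by apply: eq_card => y; rewrite !inE andbT.
  by apply/esym/eq_card0 => y; rewrite !inE andbF.
rewrite -[LHS](cardsID [set q : V * V | q.2 \in C]) /n_edges_in /n_outgoing.
by congr addn; apply: eq_card => q; rewrite !inE; case: (E _ _); case: (_ \in C); case: (_ \in C).
Qed.

Lemma gall_ge4 C : is_gall E C -> 3 < #|C|.
Proof.
move=> gC; have C3 := gall_card3 gC; have nC := block_ns (gall_block gC).
rewrite ltn_neqAle C3 andbT; apply/negP => /eqP C3e.
case/card_gt0P: (ltnW (ltnW C3)) => x xC.
case/card_gt1P: (nbr2 nC C3 xC) => y [z [yN zN yz]].
move: yN zN; rewrite !inE => /andP[yC axy] /andP[zC axz].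
have Ny : nbr C y = C :\ y.
  apply/eqP; rewrite eqEcard; apply/andP; split.
    apply/subsetP => u; rewrite !inE => /andP[uC ayu].
    by rewrite uC andbT eq_sym (adj_neq ayu).
  have := nbr2 nC C3 yC; move: C3e; rewrite (cardsD1 y) yC; lia.
have zN : z \in nbr C y by rewrite Ny in_setD1 zC eq_sym yz.
move: zN; rewrite inE => /andP[_ ayz].
by apply: (Htri axy ayz); rewrite adjC.
Qed.

Lemma gall_facts C : is_gall E C ->
  [/\ n_edges_in E C = #|C|, #|[set v in C | is_hybrid E v]| = 1 & n_outgoing E C + 1 = #|C|].
Proof.
move=> gC; have C3 := gall_card3 gC; have bC := gall_block gC; have nC := block_ns bC.
have mC := ns_edges nC C3.
have noleaf v : v \in C -> ~~ is_leaf E v.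
  move=> vC; apply/negP => Lv; have := nbr2 nC C3 vC.
  case: (leaf_parent Lv) => p Hp.
  have : nbr C v \subset [set p].
    apply/subsetP => u; rewrite !inE /adj (leaf_noout Lv) Hp /=; by case/andP.
  move/subset_leq_card; rewrite cards1; lia.
have Hin := in_sum C.
have Hb : \sum_(v in C) (indeg E v + (v == r)) <= \sum_(v in C) (1 + is_hybrid E v).
  by apply: leq_sum => v _; exact: indeg_bound.
rewrite !big_split /= sum1_card !sum_card_in in Hb.
have Hl := Hlvl bC.
have HR : 0 < inC C + #|[set v in C | v == r]|.
  case: (boolP (r \in C)) => rC.
    rewrite addn_gt0; apply/orP; right; apply/card_gt0P; exists r; by rewrite !inE rC eqxx.
  case/card_gt0P: (ltnW (ltnW C3)) => v vC.
  case/connectP: (reach v) => p P L; rewrite L in vC.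
  case: (path_enter P rC vC) => q Hq; rewrite addn_gt0; apply/orP; left.
  by apply/card_gt0P; exists q; rewrite inE.
have Hout : \sum_(v in C) (outdeg E v + is_hybrid E v) = \sum_(v in C) 2.
  by apply: eq_bigr => v vC; apply: outdeg_nonleaf; apply: noleaf.
rewrite big_split /= sum_nat_const out_sum sum_card_in in Hout.
split; lia.
Qed.

Lemma E_adj : subrel E (adj E).
Proof. by move=> x y e; rewrite /adj e. Qed.

Lemma path_mem_conn x p y : path E x p -> y \in p -> connect E y (last x p).
Proof.
move=> P yp; case/splitPr: yp P => p1 p2.
rewrite cat_path last_cat /= => /andP[_ /andP[_ P2]].
by apply/connectP; exists p2.
Qed.

Lemma path_in (T : {set V}) x q : path (adj_in E T) x q -> x \in T -> {subset x :: q <= T}.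
Proof.
elim: q x => [|y q IH] x /=.
  by move=> _ xT z; rewrite inE => /eqP ->.
case/andP=> /and3P[_ yT _] P xT z; rewrite inE => /orP[/eqP -> //|zq].
exact: IH P yT z zq.
Qed.

Lemma hyb_parents h : is_hybrid E h -> exists p1 p2 c,
  [/\ p1 != p2, forall u, E u h = (u == p1) || (u == p2) & forall w, E h w = (w == c)].
Proof.
case/andP => /eqP i o.
have : #|[set u | E u h]| == 2 by apply/eqP; rewrite -i; apply: eq_card => u; rewrite !inE.
case/cards2P => p1 [p2 [p12 Hs]].
move: o => /card1P[c Hc].
exists p1, p2, c; split; first done.
  by move=> u; have := congr1 (fun S : {set V} => u \in S) Hs; rewrite !inE.
by move=> w; move: (Hc w); rewrite !inE.
Qed.

Lemma hyb_avoid h p : is_hybrid E h -> E p h -> connect (adj_in E (~: [set h])) r p.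
Proof.
move=> Hh Eph; have hr := hyb_not_root Hh.
case/connectP: (reach p) => q P L.
have sub : {subset r :: q <= ~: [set h]}.
  move=> z zi; rewrite !inE; apply/negP => /eqP zh; subst z.
  move: zi; rewrite inE (negbTE hr) /= => hq.
  have := path_mem_conn P hq; rewrite -L => C.
  by have := Hacyc Eph; rewrite C.
rewrite L; exact: (path_conn (sub_path E_adj P) sub (mem_last r q)).
Qed.

Lemma hyb_gall h : is_hybrid E h ->
  exists2 B, is_gall E B & h \in B /\ forall C, is_gall E C -> h \in C -> C = B.
Proof.
move=> Hh; case: (hyb_parents Hh) => p1 [p2 [c [p12 Hp Hc]]].
have E1 : E p1 h by rewrite Hp eqxx.
have E2 : E p2 h by rewrite Hp eqxx orbT.
have C12 : connect (adj_in E (~: [set h])) p1 p2.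
  apply: connect_trans (_ : connect _ p1 r) (hyb_avoid Hh E2).
  by rewrite conn_sym (hyb_avoid Hh E1).
case/connectP: C12 => q0 P0; case: (shortenP P0) => q P U _ L {P0}.
have hp1 : h != p1 by apply: contraTneq E1 => <-; rewrite noloop.
have hp2 : h != p2 by apply: contraTneq E2 => <-; rewrite noloop.
have allT : {subset p1 :: q <= ~: [set h]}.
  by apply: path_in P _; rewrite !inE eq_sym.
have hq : h \notin p1 :: q by apply/negP => /allT; rewrite !inE eqxx.
have U' : uniq (h :: p1 :: q) by rewrite cons_uniq hq U.
have P' : path (adj E) h (p1 :: q).
  rewrite /= {1}/adj E1 orbT /=; by apply: sub_path P => s t /and3P[_ _].
have L' : adj E (last h (p1 :: q)) h by rewrite /= -L /adj E2.
have nS := cycle_ns U' P' L'.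
have hS : h \in [set z in h :: p1 :: q] by rewrite inE mem_head.
have p1S : p1 \in [set z in h :: p1 :: q] by rewrite !inE eqxx orbT.
have p2S : p2 \in [set z in h :: p1 :: q] by rewrite inE L inE mem_last orbT.
have S3 := three_card hS p1S p2S hp1 hp2 p12.
case: (block_exists nS) => B bB SB.
have B3 : 2 < #|B| by apply: leq_trans S3 (subset_leq_card SB).
have hB := subsetP SB _ hS; have p1B := subsetP SB _ p1S; have p2B := subsetP SB _ p2S.
exists B.
  rewrite /is_gall bB /=; apply: leq_trans (ns_edges (block_ns bB) B3); exact: ltnW.
split => // C gC hC.
have C3 := gall_card3 gC.
have N2 := nbr2 (block_ns (gall_block gC)) C3 hC.
have [p1C|p1C] := boolP (p1 \in C).
  exact: (block_uniq (gall_block gC) bB hp1 hC p1C hB p1B).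
have [p2C|p2C] := boolP (p2 \in C).
  exact: (block_uniq (gall_block gC) bB hp2 hC p2C hB p2B).
exfalso.
have : nbr C h \subset [set c].
  apply/subsetP => u; rewrite !inE /adj Hc Hp => /andP[uC].
  case/or3P => [//| /eqP eu | /eqP eu]; subst u; [by rewrite uC in p1C | by rewrite uC in p2C].
move/subset_leq_card; rewrite cards1 => H; by have := leq_trans N2 H.
Qed.

Lemma galls_eq_hyb : #|[set C | is_gall E C]| = #|[set v | is_hybrid E v]|.
Proof.
transitivity (\sum_(C | is_gall E C) #|[set v in C | is_hybrid E v]|).
  rewrite -sum1_card; apply: eq_big => [C|C gC]; first by rewrite inE.
  by move: gC; rewrite inE => /gall_facts[].
have -> : \sum_(C | is_gall E C) #|[set v in C | is_hybrid E v]| =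
    \sum_(C | is_gall E C) \sum_v nat_of_bool ((v \in C) && is_hybrid E v).
  by apply: eq_bigr => C _; rewrite sum_card.
rewrite exchange_big /= -sum_card; apply: eq_bigr => v _.
case hv: (is_hybrid E v); last by rewrite big1 // => C _; rewrite andbF.
case: (hyb_gall hv) => B gB [vB Hu].
rewrite (bigD1 B) //= vB big1 // => C /andP[gC CB].
case vC: (v \in C) => //; by rewrite (Hu C gC vC) eqxx in CB.
Qed.

Lemma gsum_const k : \sum_(C | is_gall E C) k = k * n_galls E.
Proof.
rewrite /n_galls -sum1_card big_distrr /=; apply: eq_big => [C|C _]; first by rewrite inE.
by rewrite muln1.
Qed.

Lemma main_sec (n : nat) : #|leaves E| = n ->
  n_galls E + c_N E + 2 <= n /\
  ((forall v : V, ~~ is_hybrid E v) \/ (forall C, is_gall E C -> n_outgoing E C = 3) ->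
   n_galls E + c_N E + 2 = n).
Proof.
move=> Hn.
have A1 := arcs_eq; have A2 := arcs_split; have A3 := cut_card; have A4 := noncut_sum.
have A5 : n_galls E = #|[set v | is_hybrid E v]| := galls_eq_hyb.
have A6 : 4 * n_galls E <= \sum_(C | is_gall E C) n_edges_in E C.
  rewrite -gsum_const; apply: leq_sum => C gC.
  by case: (gall_facts gC) => -> _ _; apply: gall_ge4.
rewrite Hn in A1 A3.
split; first lia.
case=> [Hh|H3].
  have H0 : #|[set v | is_hybrid E v]| = 0 by apply: eq_card0 => v; rewrite !inE (negbTE (Hh v)).
  have L0 : \sum_(C | is_gall E C) n_edges_in E C = 0.
    apply: big_pred0 => C; apply/negbTE/negP => gC.
    case: (gall_facts gC) => _ Hy _.
    by move: Hy; rewrite (eq_card0 (A := [set v in C | is_hybrid E v])) // => v; rewrite !inE (negbTE (Hh v)) andbF.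
  lia.
have L4 : \sum_(C | is_gall E C) n_edges_in E C = 4 * n_galls E.
  rewrite -gsum_const; apply: eq_bigr => C gC.
  by case: (gall_facts gC) => -> _; rewrite H3.
lia.
Qed.
End Net.

Theorem mainTheorem3 (V : finType) (E : rel V) (n : nat) :
  2 <= n -> binary_level1 E -> #|leaves E| = n ->
  n_galls E + c_N E + 2 <= n /\
  ((forall v : V, ~~ is_hybrid E v) \/
   (forall C : {set V}, is_gall E C -> n_outgoing E C = 3) ->
   n_galls E + c_N E + 2 = n).
Proof.
move=> _ [[Hacyc [r [Hr0 Hr2 Hroot Htype]]] Htri Hlvl] Hn.
exact: (main_sec Hacyc Hr0 Hroot Hr2 Htype Htri Hlvl Hn).
Qed.
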